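(* There exist binary-input discrete memoryless channels $W$ and $V$ with a common finite output alphabet, both symmetrized by the same involutive permutation of the output alphabet, such that $$C_P(W,V) > C(W,V).$$
   Context: A binary-input discrete memoryless channel (B-DMC) $W:\{0,1\}\to\mathcal{Y}$ is given by transition probabilities $W(y|x)$. $W$ and $V$ are symmetrized by the same permutation if there is a permutation $\pi$ of $\mathcal{Y}$ with $\pi=\pi^{-1}$ and $W(y|0)=W(\pi(y)|1)$, $V(y|0)=V(\pi(y)|1)$ for all $y$. Mismatched capacity $C(W,V)$: the supremum of rates $R$ such that for every $\epsilon>0$ and all sufficiently large $n$ there is a codebook $\{\mathbf{x}(1),\dots,\mathbf{x}(M)\}\subset\{0,1\}^n$ with $\frac{\log M}{n}>R$ and maximal error probability less than $\epsilon$ over the memoryless channel $W$, when decoded by outputting the unique $i$ with $\prod_k V(y_k|x_k(i))>\prod_k V(y_k|x_k(j))$ for all $j\neq i$ (erasure/error if no such $i$). Polar transforms: $W^-(y_1y_2|u_1)=\sum_{u_2\in\mathbb{F}_2}\tfrac12 W(y_1|u_1\oplus u_2)W(y_2|u_2)$, $W^+(y_1y_2u_1|u_2)=\tfrac12 W(y_1|u_1\oplus u_2)W(y_2|u_2)$; iterating, for $N=2^n$ one obtains synthetic channels $W_N^{(i)}$, $i=1,\dots,N$ (the channels $W^{s}$, $s\in\{+,-\}^n$, in Arıkan's ordering), and similarly $V_N^{(i)}$ from $V$. Polar mismatched capacity $C_P(W,V)$: a polar code of blocklength $N=2^n$ uses Arıkan's polar encoder with an information set $\mathcal{A}\subseteq\{1,\dots,N\}$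 carrying data and the remaining inputs frozen to known values; the transmitted word is sent over $N$ independent uses of $W$. The mismatched successive cancellation decoder designed for $V$ decodes $\hat u_i=u_i$ for $i\notin\mathcal{A}$ and, for $i\in\mathcal{A}$, $\hat u_i=f^{(i)}(y_1^N,\hat u_1^{i-1})$ where $f^{(i)}$ is the maximum-likelihood decision rule for the synthetic channel $V_N^{(i)}$ (rather than $W_N^{(i)}$). $C_P(W,V)$ is the supremum of rates $|\mathcal{A}|/N$ achievable by such polar codes with block error probability tending to $0$ as $N\to\infty$. *)

(* Defs.v *)
From HB Require Import structures.
From mathcomp Require Import all_boot all_order all_algebra.
From mathcomp Require Import classical_sets reals ereal exp.
Set Implicit Arguments. Unset Strict Implicit. Unset Printing Implicit Defensive.
Import Order.TTheory GRing.Theory Num.Theory.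
Local Open Scope ring_scope.

Section Channels.
Variable R : realType.

(* A binary-input DMC W : {0,1} -> Y, input 0 = false, 1 = true. *)
Definition is_BDMC (Y : finType) (W : bool -> Y -> R) : Prop :=
  (forall x y, 0 <= W x y) /\ (forall x, \sum_(y : Y) W x y = 1).

Definition symmetrized_by_same_perm (Y : finType) (W V : bool -> Y -> R) : Prop :=
  exists pi : Y -> Y, involutive pi /\
    (forall y, W false y = W true (pi y)) /\ (forall y, V false y = V true (pi y)).

Definition chan_n (Y : finType) (W : bool -> Y -> R) (n : nat)
  (x : {ffun 'I_n -> bool}) (y : {ffun 'I_n -> Y}) : R :=
  \prod_(k < n) W (x k) (y k).

Definition log2 (x : R) : R := ln x / ln 2.

(* the mismatched decoder designed for V outputs i iff V^n(y|x(i)) > V^n(y|x(j))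
   for all j <> i; [mis_correct] says it outputs the transmitted index i. *)
Definition mis_correct (Y : finType) (V : bool -> Y -> R) (n M : nat)
  (c : 'I_M -> {ffun 'I_n -> bool}) (i : 'I_M) (y : {ffun 'I_n -> Y}) : bool :=
  [forall j : 'I_M, (j != i) ==> (chan_n V (c j) y < chan_n V (c i) y)].

Definition mis_err (Y : finType) (W V : bool -> Y -> R) (n M : nat)
  (c : 'I_M -> {ffun 'I_n -> bool}) (i : 'I_M) : R :=
  \sum_(y : {ffun 'I_n -> Y} | ~~ mis_correct V c i y) chan_n W (c i) y.

Definition mis_achievable (Y : finType) (W V : bool -> Y -> R) (r : R) : Prop :=
  forall eps : R, 0 < eps -> exists n0 : nat, forall n : nat, (n0 <= n)%N ->
    exists (M : nat) (c : 'I_M -> {ffun 'I_n -> bool}),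
      [/\ (0 < M)%N, injective c,
          log2 M%:R / n%:R > r &
          forall i : 'I_M, mis_err W V c i < eps].

Definition mis_capacity (Y : finType) (W V : bool -> Y -> R) : \bar R :=
  ereal_sup [set (r%:E) | r in mis_achievable W V].

(* k-th binary digit (k = 0 is the least significant) *)
Definition bitn (i k : nat) : bool := odd (i %/ 2 ^ k).

(* Arikan's generator matrix G_N = B_N F^{(x)n}, N = 2^n, 0-indexed:
   (F^{(x)n})_{a,b} = [bits of b are contained in bits of a],
   B_N is the bit-reversal permutation of rows. *)
Definition Gpolar (n : nat) (i j : 'I_(2 ^ n)) : bool :=
  [forall k : 'I_n, bitn j k ==> bitn i (n - 1 - k)].

Definition polar_enc (n : nat) (u : {ffun 'I_(2 ^ n) -> bool}) : {ffun 'I_(2 ^ n) -> bool} :=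
  [ffun j => \big[addb/false]_(i < 2 ^ n) (u i && Gpolar i j)].

(* synthetic channel W_N^{(i)}(y_1^N, u_1^{i-1} | u_i = a) (Arikan, eq. (5));
   only the entries p_j, j < i, of the past vector p matter. *)
Definition synth (Y : finType) (W : bool -> Y -> R) (n : nat) (i : 'I_(2 ^ n))
  (y : {ffun 'I_(2 ^ n) -> Y}) (p : {ffun 'I_(2 ^ n) -> bool}) (a : bool) : R :=
  \sum_(u : {ffun 'I_(2 ^ n) -> bool} |
          [forall j : 'I_(2 ^ n), (j < i)%N ==> (u j == p j)] && (u i == a))
     (2 ^ (2 ^ n).-1)%:R^-1 * chan_n W (polar_enc u) y.

(* ML decision for the synthetic channel V_N^{(i)} (ties decided as 0) *)
Definition ml_dec (Y : finType) (V : bool -> Y -> R) (n : nat) (i : 'I_(2 ^ n))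
  (y : {ffun 'I_(2 ^ n) -> Y}) (p : {ffun 'I_(2 ^ n) -> bool}) : bool :=
  ~~ (synth V i y p true <= synth V i y p false).

(* mismatched successive cancellation decoder designed for V, information set A,
   frozen values taken from u (u_i for i \notin A is known to the decoder).
   [sc_aux k] holds the decisions for the indices < k (other entries false). *)
Fixpoint sc_aux (Y : finType) (V : bool -> Y -> R) (n : nat) (A : {set 'I_(2 ^ n)})
  (frozen : {ffun 'I_(2 ^ n) -> bool}) (y : {ffun 'I_(2 ^ n) -> Y}) (k : nat)
  : {ffun 'I_(2 ^ n) -> bool} :=
  match k with
  | 0 => [ffun => false]
  | k'.+1 =>
      let prev := sc_aux V A frozen y k' in
      [ffun j : 'I_(2 ^ n) =>
         if (j < k')%N then prev j
         else if (nat_of_ord j == k') then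
                (if j \in A then ml_dec V j y prev else frozen j)
         else false]
  end.

Definition sc_decode (Y : finType) (V : bool -> Y -> R) (n : nat) (A : {set 'I_(2 ^ n)})
  (frozen : {ffun 'I_(2 ^ n) -> bool}) (y : {ffun 'I_(2 ^ n) -> Y})
  : {ffun 'I_(2 ^ n) -> bool} := sc_aux V A frozen y (2 ^ n).

(* block error probability of the polar code (A, frozen values fr) over W with
   the mismatched SC decoder for V: data bits u_A uniform, frozen u_i = fr i. *)
Definition polar_block_err (Y : finType) (W V : bool -> Y -> R) (n : nat)
  (A : {set 'I_(2 ^ n)}) (fr : {ffun 'I_(2 ^ n) -> bool}) : R :=
  \sum_(u : {ffun 'I_(2 ^ n) -> bool} | [forall i : 'I_(2 ^ n), (i \notin A) ==> (u i == fr i)])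
    (2 ^ #|A|)%:R^-1 *
    \sum_(y : {ffun 'I_(2 ^ n) -> Y} | sc_decode V A u y != u)
       chan_n W (polar_enc u) y.

Definition polar_achievable (Y : finType) (W V : bool -> Y -> R) (r : R) : Prop :=
  exists (A : forall n : nat, {set 'I_(2 ^ n)}) (fr : forall n : nat, {ffun 'I_(2 ^ n) -> bool}),
    (exists n0 : nat, forall n : nat, (n0 <= n)%N -> r <= #|A n|%:R / (2 ^ n)%:R) /\
    (forall eps : R, 0 < eps -> exists n0 : nat, forall n : nat, (n0 <= n)%N ->
       polar_block_err W V (A n) (fr n) < eps).

Definition polar_capacity (Y : finType) (W V : bool -> Y -> R) : \bar R :=
  ereal_sup [set (r%:E) | r in polar_achievable W V].

End Channels.

(* Main.v *)
Require Import Defs.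
From HB Require Import structures.
From mathcomp Require Import all_boot all_order all_algebra.
From mathcomp Require Import classical_sets reals ereal exp.
From mathcomp Require Import lra zify.
Import Order.TTheory GRing.Theory Num.Theory.

Lemma bitn0 i : bitn i 0 = odd i.
Proof. by rewrite /bitn expn0 divn1. Qed.

Lemma bitnS i k : bitn i k.+1 = bitn i./2 k.
Proof. by rewrite /bitn expnS divnMA divn2. Qed.

Lemma bits_le n : forall a b, a < 2 ^ n ->
  (forall m, m < n -> bitn a m -> bitn b m) -> a <= b.
Proof.
elim: n => [|n IH] a b ha hb.
  by move: ha; rewrite expn0 ltnS leqn0 => /eqP ->.
have h0 : odd a -> odd b by move=> h; have := hb 0 isT; rewrite !bitn0; apply.
have h1 : a./2 <= b./2.
  apply: IH.
    move: ha; rewrite expnS -{1}(odd_double_half a) -mul2n => ha; lia.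
  by move=> m hm; have := hb m.+1 hm; rewrite !bitnS.
rewrite -(odd_double_half a) -(odd_double_half b).
move: h0; case: (odd a); case: (odd b) => //= h0; try by (have := h0 isT).
- rewrite !add1n ltnS; by rewrite leq_double.
- rewrite add0n add1n; apply: leqW; by rewrite leq_double.
- by rewrite !add0n leq_double.
Qed.

Lemma bits_exists n : forall f : nat -> bool, exists j, j < 2 ^ n /\
  forall k, k < n -> bitn j k = f k.
Proof.
elim: n => [|n IH] f.
  by exists 0; split => // k.
have [j' [hj' hk]] := IH (fun k => f k.+1).
exists (f 0 + j'.*2); split.
  rewrite expnS -mul2n; case: (f 0); lia.
case=> [|k] hk'.
  by rewrite bitn0 oddD odd_double addbF; case: (f 0).
by rewrite bitnS half_bit_double hk.
Qed.

Lemma bitn_ones n m : m < n -> bitn (2 ^ n).-1 m.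
Proof.
elim: m n => [|m IH] n hmn.
  rewrite bitn0. case: n hmn => // n _.
  have : odd (2 ^ n.+1) = false by rewrite oddX.
  have: 0 < 2 ^ n.+1 by rewrite expn_gt0.
  case: (2 ^ n.+1) => // t _ /=. by move/negbT/negPn.
case: n hmn => // n hmn; rewrite bitnS.
have -> : (2 ^ n.+1).-1./2 = (2 ^ n).-1.
  have hp : 0 < 2 ^ n by rewrite expn_gt0.
  rewrite expnS -divn2; move: hp; set t := 2 ^ n => hp.
  lia.
by apply: IH.
Qed.

Definition xorf n (u v : {ffun 'I_(2 ^ n) -> bool}) : {ffun 'I_(2 ^ n) -> bool} :=
  [ffun i => u i (+) v i].

Arguments xorf {n}.

Lemma omax_lt n : (2 ^ n).-1 < 2 ^ n.
Proof. by rewrite ltn_predL expn_gt0. Qed.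

Definition omax n : 'I_(2 ^ n) := Ordinal (omax_lt n).

Definition evec n : {ffun 'I_(2 ^ n) -> bool} := [ffun i => i == omax n].

Lemma enc_xor n (u v : {ffun 'I_(2 ^ n) -> bool}) : polar_enc (xorf u v) = xorf (@polar_enc n u) (polar_enc v).
Proof.
apply/ffunP => j; rewrite !ffunE.
rewrite -big_split /=; apply: eq_bigr => i _.
by rewrite ffunE andb_addl.
Qed.

Lemma Gpolar_max n j : Gpolar (omax n) j.
Proof.
apply/forallP => k; apply/implyP => _ /=.
apply: bitn_ones; case: k => k hk /=; lia.
Qed.

Lemma enc_evec n : polar_enc (evec n) = [ffun => true].
Proof.
apply/ffunP => j; rewrite !ffunE.
rewrite (eq_bigr (fun i => if i == omax n then Gpolar i j else false)); last first.
  by move=> i _; rewrite ffunE; case: (i == omax n).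
rewrite -big_mkcond big_pred1_eq; exact: Gpolar_max.
Qed.

Lemma enc_kernel n w : @polar_enc n w = [ffun => false] -> w = [ffun => false].
Proof.
move=> hw; apply/ffunP => i1; rewrite ffunE; apply/negP => hi1.
case: (arg_maxnP (fun i : 'I_(2 ^ n) => val i) hi1) => i0 hi0 hmax.
pose f := fun k => bitn i0 (n - 1 - k).
have [j [hj hjb]] := bits_exists n f.
have := congr1 (fun g : {ffun 'I_(2 ^ n) -> bool} => g (Ordinal hj)) hw; rewrite !ffunE /=.
rewrite (eq_bigr (fun i => if i == i0 then true else false)); last first.
  move=> i _.
  have [->|ne] := eqVneq i i0; first by rewrite hi0 /=; apply/forallP => k;
    apply/implyP; rewrite /= hjb ?ltn_ord.
  apply/negP => /andP [wi /forallP hG].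
  have hle : val i0 <= val i.
    apply: (@bits_le n _ _ (ltn_ord i0)) => m hm bm.
    have hk : n - 1 - m < n by lia.
    have := implyP (hG (Ordinal hk)); rewrite /= hjb // /f.
    have -> : n - 1 - (n - 1 - m) = m by lia.
    by apply.
  have := hmax i wi; move=> hge.
  by move/eqP: ne; apply; apply: val_inj => /=; apply/eqP; rewrite eqn_leq hle andbT; move: hge; rewrite /geq /=.
by rewrite -big_mkcond big_pred1_eq.
Qed.

Lemma enc_inj n : injective (@polar_enc n).
Proof.
move=> a b hab.
have h : xorf a b = [ffun => false].
  apply: enc_kernel; rewrite enc_xor hab; apply/ffunP => j; rewrite !ffunE.
  by rewrite addbb.
apply/ffunP => i; have := congr1 (fun g : {ffun 'I_(2 ^ n) -> bool} => g i) h; rewrite !ffunE.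
by case: (a i); case: (b i).
Qed.
Local Open Scope ring_scope.

Definition Wc (R : realType) (x y : bool) : R := (y == x)%:R.
Definition Vc (R : realType) (x y : bool) : R := (y != x)%:R.

Lemma prod_bool (R : realType) n (b : 'I_n -> bool) :
  \prod_(k < n) ((b k)%:R : R) = ([forall k, b k])%:R.
Proof.
case: (boolP [forall k, b k]) => [/forallP h|/forallPn [k hk]].
  by rewrite big1 // => k _; rewrite h.
by rewrite (bigD1 k) //= (negbTE hk) mul0r.
Qed.

Lemma chan_W (R : realType) n (x y : {ffun 'I_n -> bool}) :
  chan_n (Wc R) x y = (y == x)%:R.
Proof.
rewrite /chan_n prod_bool; congr (_%:R); congr (nat_of_bool _).
apply/idP/idP => [/forallP h|/eqP ->]; last by apply/forallP => k.
by apply/eqP/ffunP => k; apply/eqP; apply: h.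
Qed.

Lemma chan_V (R : realType) n (x y : {ffun 'I_n -> bool}) :
  chan_n (Vc R) x y = ([forall k, y k != x k])%:R.
Proof. by rewrite /chan_n prod_bool. Qed.

Section Polar.
Variables (R : realType) (n : nat).

Lemma synth_V (i : 'I_(2 ^ n)) (u p : {ffun 'I_(2 ^ n) -> bool}) (a : bool) :
  val i != (2 ^ n).-1 -> (forall j : 'I_(2 ^ n), (j < i)%N -> p j = u j) ->
  synth (Vc R) i (polar_enc u) p a = (2 ^ (2 ^ n).-1)%:R^-1 * (a == u i)%:R.
Proof.
move=> hi hp.
set K := (2 ^ (2 ^ n).-1)%:R^-1 : R.
set us := xorf u (evec n).
have hch : forall u', chan_n (Vc R) (polar_enc u') (polar_enc u) = (u' == us)%:R.
  move=> u'; rewrite chan_V; congr (_%:R); congr (nat_of_bool _).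
  apply/idP/idP => [/forallP h|/eqP ->].
    apply/eqP; apply: enc_inj; rewrite /us enc_xor enc_evec.
    move: (polar_enc u) (polar_enc u') h => e1 e2 h.
    apply/ffunP => k; rewrite !ffunE.
    by have := h k; case: (e1 k); case: (e2 k).
  rewrite /us enc_xor enc_evec; move: (polar_enc u) => e1.
  by apply/forallP => k; rewrite !ffunE; case: (e1 k).
have husj : forall j : 'I_(2 ^ n), val j != (2 ^ n).-1 -> us j = u j.
  move=> j hj; rewrite /us !ffunE.
  have -> : (j == omax n) = false.
    by apply/negbTE; apply: contra hj => /eqP ->.
  by rewrite addbF.
rewrite /synth (eq_bigr (fun u' => if u' == us then K else 0)); last first.
  by move=> u' _; rewrite hch; case: (u' == us); rewrite ?mulr1 ?mulr0.
rewrite -big_mkcondr.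
case: (eqVneq a (u i)) => [ha|ha].
  rewrite (eq_bigl (fun u' => u' == us)); first by rewrite big_pred1_eq mulr1.
  move=> u'; case: (eqVneq u' us) => [->|]; last by rewrite andbF.
  rewrite andbT husj // ha eqxx andbT; apply/forallP => j; apply/implyP => hj.
  rewrite husj ?hp //; apply/negP => /eqP hj'.
  have hi2 := ltn_ord i; move: hj hj' hi2; rewrite /=. lia.
rewrite big_pred0 ?mulr0 // => u'; case: (eqVneq u' us) => [->|]; last by rewrite andbF.
by rewrite andbT husj // eq_sym (negbTE ha) andbF.
Qed.

Lemma ml_V (i : 'I_(2 ^ n)) (u p : {ffun 'I_(2 ^ n) -> bool}) :
  val i != (2 ^ n).-1 -> (forall j : 'I_(2 ^ n), (j < i)%N -> p j = u j) ->
  ml_dec (Vc R) i (polar_enc u) p = u i.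
Proof.
move=> hi hp; rewrite /ml_dec !synth_V //.
have hK : 0 < (2 ^ (2 ^ n).-1)%:R^-1 :> R by rewrite invr_gt0 ltr0n expn_gt0.
by case: (u i) => /=; rewrite ?mulr1 ?mulr0; [rewrite leNgt hK | rewrite ltW].
Qed.

Definition Aset : {set 'I_(2 ^ n)} := [set i | val i != (2 ^ n).-1].

Lemma sc_V (u : {ffun 'I_(2 ^ n) -> bool}) k (j : 'I_(2 ^ n)) :
  sc_aux (Vc R) Aset u (polar_enc u) k j = if (j < k)%N then u j else false.
Proof.
elim: k j => [|k IH] j; first by rewrite ffunE.
rewrite /= ffunE IH.
case: (ltnP j k) => hjk; first by rewrite ltnS ltnW.
case: (eqVneq (val j) k) => [hj|hj]; last first.
  by rewrite ltnS leqNgt; have -> : (k < j)%N by rewrite ltn_neqAle eq_sym hj hjk.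
rewrite hj ltnSn.
case: ifP => // hA; apply: ml_V; first by move: hA; rewrite inE.
by move=> j' hj'; rewrite IH -hj hj'.
Qed.

Lemma sc_decode_V (u : {ffun 'I_(2 ^ n) -> bool}) :
  sc_decode (Vc R) Aset u (polar_enc u) = u.
Proof. by apply/ffunP => j; rewrite /sc_decode sc_V ltn_ord. Qed.

Lemma polar_err0 fr : polar_block_err (Wc R) (Vc R) Aset fr = 0.
Proof.
rewrite /polar_block_err big1 // => u _.
rewrite big1 ?mulr0 // => y hy; rewrite chan_W.
case: (eqVneq y (polar_enc u)) => [e|] //; by move: hy; rewrite e sc_decode_V eqxx.
Qed.

End Polar.

Lemma mis_neg (R : realType) (r : R) : mis_achievable (Wc R) (Vc R) r -> r < 0.
Proof.
move=> h; have [n0 hn0] := h 1 ltr01.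
have [M [c [hM hinj hr herr]]] := hn0 n0.+1 (leqnSn _).
case: (ltnP 1 M) => hM2.
  pose i0 := Ordinal hM; pose i1 := Ordinal hM2.
  have := herr i0; rewrite /mis_err.
  have hy0 : ~~ mis_correct (Vc R) c i0 (c i0).
    apply/forallPn; exists i1; rewrite negb_imply; apply/andP; split => //.
    rewrite !chan_V ltNge negbK.
    have -> : [forall k, c i0 k != c i0 k] = false.
      by apply/negbTE/forallPn; exists ord0; rewrite eqxx.
    by rewrite ler0n.
  rewrite (bigD1 (c i0)) //= chan_W eqxx ltNge lerDl sumr_ge0 //= => y _.
  by rewrite chan_W ler0n.
have hM1 : M = 1%N by apply/eqP; rewrite eqn_leq hM2 hM.
by move: hr; rewrite hM1 /log2 ln1 !mul0r.
Qed.

Lemma rate_half (R : realType) n : (1 <= n)%N ->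
  (1 / 2 : R) <= #|Aset n|%:R / (2 ^ n)%:R.
Proof.
move=> hn.
have hA : Aset n = [set~ omax n].
  by apply/setP => i; rewrite !inE.
rewrite hA cardsC1 card_ord.
have [s hs] : exists s, (2 ^ n = s.+2)%N.
  exists (2 ^ n - 2)%N; have : (2 <= 2 ^ n)%N.
    by rewrite -{1}(expn1 2) leq_exp2l.
  move: (2 ^ n)%N => t ht; lia.
rewrite hs ler_pdivlMr ?ltr0n //= -[s.+2]addn2 -[s.+1]addn1 !natrD.
have : (0 : R) <= s%:R by rewrite ler0n.
lra.
Qed.

Lemma polar_half (R : realType) : polar_achievable (Wc R) (Vc R) (1 / 2).
Proof.
exists Aset, (fun n => [ffun => false]); split.
  by exists 1%N => n hn; apply: rate_half.
by move=> eps he; exists 0%N => n _; rewrite polar_err0.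
Qed.

Theorem mainTheorem2 (R : realType) :
  exists (Y : finType) (W V : bool -> Y -> R),
    [/\ is_BDMC W, is_BDMC V, symmetrized_by_same_perm W V &
        (mis_capacity W V < polar_capacity W V)%E].
Proof.
exists bool, (Wc R), (Vc R); split.
- split; first by move=> x y; rewrite /Wc ler0n.
  by move=> x; rewrite big_bool /Wc; case: x => /=; rewrite ?addr0 ?add0r.
- split; first by move=> x y; rewrite /Vc ler0n.
  by move=> x; rewrite big_bool /Vc; case: x => /=; rewrite ?addr0 ?add0r.
- exists negb; split; first exact: negbK.
  by split => y; rewrite /Wc /Vc; case: y.
- have h1 : (mis_capacity (Wc R) (Vc R) <= 0%:E)%E.
    apply: ge_ereal_sup => _ [r hr <-]; rewrite lee_fin; apply: ltW; exact: mis_neg.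
  have h2 : ((1 / 2 : R)%:E <= polar_capacity (Wc R) (Vc R))%E.
    by apply: ereal_sup_ubound; exists (1 / 2) => //; exact: polar_half.
  apply: (le_lt_trans h1); apply: (lt_le_trans _ h2); rewrite lte_fin; lra.
Qed.
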